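(* Let $R$ be a commutative noetherian ring, let $\mathfrak a$ be an ideal of $R$ of positive height and let $\mathcal S$ be a Serre subcategory of $R$-modules. Then $(\mathcal N\mathcal S)_{\mathfrak a}\subseteq\mathcal S_{\mathfrak a}$. In particular, if $\mathcal N\mathcal S$ satisfies the condition $C_{\mathfrak a}$, then so does $\mathcal S$.
   Context: A Serre subcategory is closed under submodules, quotients and extensions. $\mathcal N$ is the subcategory of finitely generated modules; $\mathcal N\mathcal S$ is the class of modules $M$ with an exact sequence $0\to N\to M\to S\to0$, $N$ finitely generated, $S\in\mathcal S$. For a subcategory $\mathcal T$, $\mathcal T$ satisfies $C_{\mathfrak a}$ on a module $M$ if ($\Gamma_{\mathfrak a}(M)=M$ and $(0:_M\mathfrak a)\in\mathcal T$) implies $M\in\mathcal T$; $\mathcal T_{\mathfrak a}$ is the class of all modules on which $\mathcal T$ satisfies $C_{\mathfrak a}$; $\mathcal T$ satisfies $C_{\mathfrak a}$ if $\mathcal T_{\mathfrak a}$ is all $R$-modules. *)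

(* Defs.v *)
From HB Require Import structures.
From mathcomp Require Import all_boot all_order all_algebra.
Set Implicit Arguments. Unset Strict Implicit. Unset Printing Implicit Defensive.
Import GRing.Theory.
Local Open Scope ring_scope.

(* Commutative ring R (possibly the zero ring): comPzRingType.
   R-modules: lmodType R.  Ideals: predicates R -> Prop.
   A "subcategory" / class of R-modules: a predicate lmodType R -> Prop. *)

Section Defs.
Variable R : comPzRingType.

Definition is_ideal (I : R -> Prop) : Prop :=
  [/\ I 0, (forall x y, I x -> I y -> I (x + y)) & (forall r x, I x -> I (r * x))].

Definition is_proper_ideal (I : R -> Prop) : Prop := is_ideal I /\ ~ I 1.

Definition is_prime_ideal (P : R -> Prop) : Prop :=
  [/\ is_ideal P, ~ P 1 & forall x y, P (x * y) -> P x \/ P y].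

Definition ideal_span (s : seq R) (x : R) : Prop :=
  exists c : 'I_(size s) -> R, x = \sum_(i < size s) c i * s`_i.

Definition noetherian_ring : Prop :=
  forall I : R -> Prop, is_ideal I -> exists s : seq R, forall x, I x <-> ideal_span s x.

Definition subset_R (I J : R -> Prop) := forall x, I x -> J x.

Definition prime_height_ge (P : R -> Prop) (n : nat) : Prop :=
  exists C : nat -> (R -> Prop),
    [/\ forall i, (i <= n)%N -> is_prime_ideal (C i),
        forall x, C n x <-> P x &
        forall i, (i < n)%N -> subset_R (C i) (C i.+1) /\ ~ subset_R (C i.+1) (C i)].

(* ht(a) = inf { ht(P) | P prime, a <= P };  ht(a) >= n *)
Definition ideal_height_ge (a : R -> Prop) (n : nat) : Prop :=
  forall P, is_prime_ideal P -> subset_R a P -> prime_height_ge P n.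

Definition fin_gen (M : lmodType R) : Prop :=
  exists s : seq M, forall x : M,
    exists c : 'I_(size s) -> R, x = \sum_(i < size s) c i *: s`_i.

Definition short_exact (N M Q : lmodType R) (f : {linear N -> M}) (g : {linear M -> Q}) :=
  [/\ injective f, (forall q, exists m, g m = q) &
      forall m, g m = 0 <-> exists n, m = f n].

Definition serre (S : lmodType R -> Prop) : Prop :=
  [/\
      (forall (N M : lmodType R) (f : {linear N -> M}), injective f -> S M -> S N),
      (forall (M Q : lmodType R) (g : {linear M -> Q}), (forall q, exists m, g m = q) ->
          S M -> S Q) &
      (forall (N M Q : lmodType R) (f : {linear N -> M}) (g : {linear M -> Q}),
          short_exact f g -> S N -> S Q -> S M)].

Definition NS (S : lmodType R -> Prop) (M : lmodType R) : Prop :=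
  exists (N Q : lmodType R) (f : {linear N -> M}) (g : {linear M -> Q}),
    [/\ short_exact f g, fin_gen N & S Q].

(* a^n x = 0 : every product of n elements of a kills x (a^n is generated by these) *)
Definition killed_by_pow (a : R -> Prop) (n : nat) (M : lmodType R) (x : M) : Prop :=
  forall r : n.-tuple R, (forall i, a (tnth r i)) -> (\prod_(i < n) tnth r i) *: x = 0.

Definition a_torsion (a : R -> Prop) (M : lmodType R) : Prop :=
  forall x : M, exists n, killed_by_pow a n x.

(* (0 :_M a) belongs to T : some module of T is isomorphic (via an injective
   linear map into M) to the submodule {x in M | a x = 0} *)
Definition annihilator_in (T : lmodType R -> Prop) (a : R -> Prop) (M : lmodType R) : Prop :=
  exists (N : lmodType R) (f : {linear N -> M}),
    [/\ injective f,
        (forall x : M, (forall r, a r -> r *: x = 0) <-> exists y, x = f y) & T N].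

(* T satisfies C_a on M ; M in T_a *)
Definition C_on (T : lmodType R -> Prop) (a : R -> Prop) (M : lmodType R) : Prop :=
  a_torsion a M -> annihilator_in T a M -> T M.

Definition satisfies_C (T : lmodType R -> Prop) (a : R -> Prop) : Prop :=
  forall M : lmodType R, C_on T a M.

End Defs.

(* Main.v *)
Require Import Defs.
From HB Require Import structures.
From mathcomp Require Import all_boot all_order all_algebra.
From Stdlib Require Import ClassicalEpsilon.
Set Implicit Arguments. Unset Strict Implicit. Unset Printing Implicit Defensive.
Import GRing.Theory.
Local Open Scope ring_scope.

Definition pb (P : Prop) : bool := if excluded_middle_informative P then true else false.
Lemma pbP (P : Prop) : reflect P (pb P).
Proof. rewrite /pb; case: excluded_middle_informative => h; by constructor. Qed.

Record closedP (R : comPzRingType) (V : lmodType R) (P : V -> Prop) := ClosedP {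
  cl0 : P 0; clD : forall x y, P x -> P y -> P (x + y); clZ : forall r x, P x -> P (r *: x) }.

Section Sub.
Variables (R : comPzRingType) (V : lmodType R) (P : V -> Prop) (c : closedP P).
Definition submT (_ : closedP P) := {x : V | pb (P x)}.
HB.instance Definition _ := Choice.on (submT c).
Definition sm (x : V) (h : P x) : submT c := exist _ x (introT (pbP _) h).
Lemma smP (x : submT c) : P (val x). Proof. exact/pbP/(valP x). Qed.
Definition sub_zero : submT c := sm (cl0 c).
Definition sub_add (x y : submT c) : submT c := sm (clD c (smP x) (smP y)).
Definition sub_scale (r : R) (x : submT c) : submT c := sm (clZ c r (smP x)).
Definition sub_opp (x : submT c) : submT c := sub_scale (-1) x.
Lemma sub_addA : associative sub_add.
Proof. by move=> x y z; apply: val_inj; rewrite /= addrA. Qed.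
Lemma sub_addC : commutative sub_add.
Proof. by move=> x y; apply: val_inj; rewrite /= addrC. Qed.
Lemma sub_add0 : left_id sub_zero sub_add.
Proof. by move=> x; apply: val_inj; rewrite /= add0r. Qed.
Lemma sub_addN : left_inverse sub_zero sub_opp sub_add.
Proof. by move=> x; apply: val_inj; rewrite /= scaleN1r addNr. Qed.
HB.instance Definition _ := GRing.isZmodule.Build (submT c) sub_addA sub_addC sub_add0 sub_addN.
Lemma sub_scaleA a b v : sub_scale a (sub_scale b v) = sub_scale (a * b) v.
Proof. by apply: val_inj; rewrite /= scalerA. Qed.
Lemma sub_scale1 : left_id 1 sub_scale.
Proof. by move=> x; apply: val_inj; rewrite /= scale1r. Qed.
Lemma sub_scaleDr : right_distributive sub_scale +%R.
Proof. by move=> r x y; apply: val_inj; rewrite /= scalerDr. Qed.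
Lemma sub_scaleDl v : {morph sub_scale^~ v: a b / a + b}.
Proof. by move=> a b; apply: val_inj; rewrite /= scalerDl. Qed.
HB.instance Definition _ := GRing.Zmodule_isLmodule.Build R (submT c) sub_scaleA sub_scale1 sub_scaleDr sub_scaleDl.
Definition subincl (x : submT c) : V := val x.
Lemma subincl_lin : linear subincl. Proof. by []. Qed.
HB.instance Definition _ := GRing.isLinear.Build R (submT c) V _ subincl subincl_lin.
Lemma subincl_inj : injective subincl. Proof. exact: val_inj. Qed.
Lemma val_sub (x y : submT c) : val (x - y) = val x - val y.
Proof. by rewrite /= scaleN1r. Qed.
End Sub.

Section LinOf.
Variables (R : comPzRingType) (U V : lmodType R) (f : U -> V) (hf : linear f).
Definition lin_of_ (_ : linear f) : U -> V := fun x => f x.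
Definition lin_of := lin_of_ hf.
HB.instance Definition _ := GRing.isLinear.Build R U V _ (lin_of_ hf) hf.
End LinOf.

Section Lift.
Variables (R : comPzRingType) (A T X : lmodType R) (t : {linear T -> X}) (ht : injective t)
  (kk : A -> X) (hkl : linear kk) (hk : forall x, exists y, kk x = t y).
Definition liftf (x : A) : T := proj1_sig (constructive_indefinite_description _ (hk x)).
Lemma liftfE x : t (liftf x) = kk x.
Proof. by rewrite /liftf; case: constructive_indefinite_description => y /= ->. Qed.
Lemma liftf_lin : linear liftf.
Proof. move=> r x y; apply: ht; rewrite linearP !liftfE; exact: hkl. Qed.
End Lift.

Lemma lift0_neq k (j : 'I_k) : (lift ord0 j == ord0 :> 'I_k.+1) = false.
Proof. by apply/negbTE; rewrite eq_sym neq_lift. Qed.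

Lemma ffun0E (R : comPzRingType) (V : lmodType R) (I : finType) (i : I) : (0 : {ffun I -> V}) i = 0.
Proof. exact: ffunE. Qed.
Lemma ffunZE (R : comPzRingType) (V : lmodType R) (I : finType) (r : R) (F : {ffun I -> V}) i : (r *: F) i = r *: F i.
Proof. exact: ffunE. Qed.
Lemma ffunDE (R : comPzRingType) (V : lmodType R) (I : finType) (F G : {ffun I -> V}) i : (F + G) i = F i + G i.
Proof. exact: ffunE. Qed.

Section Kill.
Variables (R : comPzRingType) (a : R -> Prop).

Lemma killed_S (M : lmodType R) n (x : M) : killed_by_pow a n x -> killed_by_pow a n.+1 x.
Proof.
move=> H r Hr; rewrite big_ord_recl -scalerA.
have := H [tuple tnth r (lift ord0 i) | i < n].
have e : \prod_(i < n) tnth [tuple tnth r (lift ord0 i) | i < n] i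
       = \prod_(i < n) tnth r (lift ord0 i).
  by apply: eq_bigr => i _; rewrite tnth_mktuple.
rewrite e => ->; first by rewrite scaler0.
by move=> i; rewrite tnth_mktuple.
Qed.

Lemma killed_le (M : lmodType R) n m (x : M) : (n <= m)%N -> killed_by_pow a n x -> killed_by_pow a m x.
Proof.
elim: m => [|m IH]; first by rewrite leqn0 => /eqP ->.
rewrite leq_eqVlt => /orP [/eqP -> //|]; rewrite ltnS => h K.
exact/killed_S/IH.
Qed.

Lemma killed_inj (M N : lmodType R) (f : {linear N -> M}) (hf : injective f) n x :
  killed_by_pow a n (f x) -> killed_by_pow a n x.
Proof. by move=> H r Hr; apply: hf; rewrite linear0 -(H r Hr) linearZ_LR. Qed.

Lemma killed_cons (M : lmodType R) n (x : M) (c : R) (r : n.-tuple R) :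
  killed_by_pow a n.+1 x -> a c -> (forall i, a (tnth r i)) ->
  (c * \prod_(i < n) tnth r i) *: x = 0.
Proof.
move=> H ac ar; have := H [tuple of c :: r].
rewrite big_ord_recl.
have e : \prod_(i < n) tnth [tuple of c :: r] (lift ord0 i) = \prod_(i < n) tnth r i.
  by apply: eq_bigr => i _; rewrite tnthS.
rewrite e => -> //.
by move=> i; case: (unliftP ord0 i) => [j ->|->]; rewrite ?tnthS.
Qed.
End Kill.

Section Main.
Variables (R : comPzRingType) (a : R -> Prop) (S : lmodType R -> Prop).
Hypothesis Ssub : forall (N M : lmodType R) (f : {linear N -> M}), injective f -> S M -> S N.
Hypothesis Squo : forall (M Q : lmodType R) (g : {linear M -> Q}), (forall q, exists m, g m = q) -> S M -> S Q.
Hypothesis Sext : forall (N M Q : lmodType R) (f : {linear N -> M}) (g : {linear M -> Q}),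
  short_exact f g -> S N -> S Q -> S M.

Definition ann (K : lmodType R) (x : K) := forall r, a r -> r *: x = 0.

Lemma annC (K : lmodType R) : closedP (@ann K).
Proof.
split.
- by move=> r _; rewrite scaler0.
- by move=> x y hx hy r hr; rewrite scalerDr hx // hy // addr0.
- by move=> c x hx r hr; rewrite scalerA mulrC -scalerA hx // scaler0.
Qed.

Lemma imgC (U V : lmodType R) (f : {linear U -> V}) : closedP (fun y => exists x, y = f x).
Proof.
split.
- by exists 0; rewrite linear0.
- by move=> x y [u ->] [v ->]; exists (u + v); rewrite linearD.
- by move=> c x [u ->]; exists (c *: u); rewrite linearZ.
Qed.

Lemma zeroC (V : lmodType R) : closedP (fun x : V => x = 0).
Proof.
split => //.
- by move=> x y -> ->; rewrite addr0.
- by move=> c x ->; rewrite scaler0.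
Qed.

Lemma S_prod (T : lmodType R) k : S T -> S {ffun 'I_k -> T}.
Proof.
move=> ST; elim: k => [|k IH].
  have hl : linear (fun _ : {ffun 'I_0 -> T} => (0 : T)).
    by move=> r x y; rewrite scaler0 addr0.
  apply: (Ssub (f := lin_of hl)) ST.
  by move=> x y _; apply/ffunP => -[].
pose fN := fun t : T => [ffun i : 'I_k.+1 => if i == ord0 then t else 0].
have fl : linear fN.
  by move=> r x y; apply/ffunP => i; rewrite !ffunE; case: eqP => _; rewrite ?scaler0 ?addr0.
pose gN := fun F : {ffun 'I_k.+1 -> T} => [ffun i : 'I_k => F (lift ord0 i)].
have gl : linear gN.
  by move=> r x y; apply/ffunP => i; rewrite !ffunE.
apply: (Sext (f := lin_of fl) (g := lin_of gl)) ST IH; split.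
- by move=> x y /ffunP/(_ ord0); rewrite /= /fN !ffunE eqxx.
- move=> q; exists [ffun i => if unlift ord0 i is Some j then q j else 0].
  by apply/ffunP => i; rewrite /= /gN !ffunE liftK.
- move=> m; split.
    move=> /ffunP H; exists (m ord0); apply/ffunP => i; rewrite /= /fN ffunE.
    case: (unliftP ord0 i) => [j ->|->]; last by rewrite eqxx.
    by rewrite lift0_neq; have := H j; rewrite /= /gN !ffunE.
  by move=> [n ->]; apply/ffunP => i; rewrite /= /gN /fN !ffunE lift0_neq.
Qed.

Definition Cond (K : lmodType R) :=
  exists (X T : lmodType R) (k : {linear K -> X}) (t : {linear T -> X}),
    [/\ S T, injective t, (forall x, ann x -> k x = 0 -> x = 0) &
        (forall x, ann x -> exists y, k x = t y)].

Lemma S_ann K : Cond K -> S (submT (annC K)).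
Proof.
case=> X [T [k [t [ST tinj k0 kex]]]].
pose kk := fun x : submT (annC K) => k (val x).
have hkl : linear kk by move=> r x y; rewrite /kk /= linearP.
have hk : forall x, exists y, kk x = t y by move=> x; apply: kex; exact: smP.
apply: (Ssub (f := lin_of (liftf_lin tinj hkl hk))) ST.
move=> x y /(congr1 t); rewrite /lin_of !liftfE /kk => e.
apply: val_inj; apply/eqP; rewrite -subr_eq0; apply/eqP; apply: k0.
  by rewrite -val_sub; exact: smP.
by rewrite linearB e subrr.
Qed.

Variable s : seq R.
Hypothesis hs : forall x, a x <-> ideal_span s x.

Lemma s_in_a (i : 'I_(size s)) : a (s`_i).
Proof.
apply/hs; exists (fun j => (j == i)%:R).
rewrite (bigD1 i) //= eqxx mul1r big1 ?addr0 // => j /negbTE ->; by rewrite mul0r.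
Qed.

Lemma ann_gen (K : lmodType R) (x : K) : ann x <-> forall i : 'I_(size s), s`_i *: x = 0.
Proof.
split; first by move=> H i; apply: H; exact: s_in_a.
move=> H r /hs [c ->]; rewrite scaler_suml big1 // => i _.
by rewrite -scalerA H scaler0.
Qed.

Lemma mainS n : forall K : lmodType R, (forall x : K, killed_by_pow a n x) -> Cond K -> S K.
Proof.
elim: n => [|n IH] K HK HC.
  have SA := S_ann HC.
  apply: (Squo (g := @subincl _ _ _ (annC K))) SA => q.
  have q0 : q = 0.
    have := HK q (tuple_of_finfun [ffun i : 'I_0 => 0]).
    by rewrite big_ord0 scale1r => ->  // -[].
  by exists 0; rewrite q0 linear0.
pose m := fun x : K => [ffun i : 'I_(size s) => s`_i *: x].
have ml : linear m by move=> r x y; apply/ffunP => i; rewrite !ffunE scalerDr !scalerA mulrC.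
pose mL := lin_of ml.
have mLE : forall x i, mL x i = s`_i *: x.
  by move=> x i; rewrite /mL /lin_of /lin_of_ /m ffunE.
pose I := submT (imgC mL).
have gh : forall x, (fun y => exists x, y = mL x) (mL x) by move=> x; exists x.
pose g := fun x : K => sm (imgC mL) (gh x).
have gl : linear g.
  move=> r x y. rewrite /g. apply: val_inj. exact: ml.

apply: (Sext (f := @subincl _ _ _ (annC K)) (g := lin_of gl)).
- split.
  + exact: val_inj.
  + move=> q; have [x hx] := smP q; exists x; apply: val_inj; by rewrite hx.
  + move=> x; split.
      move=> /(congr1 val) /= /ffunP H.
      have ax : ann x.
        by apply/ann_gen => i; have := H i; rewrite mLE ffun0E.
      by exists (sm (annC K) ax).
    move=> [y ->]; apply: val_inj; apply/ffunP => i; rewrite /= !ffunE.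
    exact: (proj1 (ann_gen _) (smP y)).
- exact: S_ann.
- apply: (IH I).
  + move=> y r hr; apply: val_inj; have [x hx] := smP y.
    rewrite /= hx; apply/ffunP => i; rewrite !ffunE scalerA mulrC.
    exact: killed_cons (HK x) (s_in_a i) hr.
  + case: HC => X [T [k [t [ST tinj k0 kex]]]].
    pose k' := fun y : I => [ffun i : 'I_(size s) => k (val y i)].
    have k'l : linear k'.
      move=> r x y; apply/ffunP => i; rewrite /k' ffunDE ffunZE !ffunE.
      by rewrite linearP.
    pose t' := fun z : {ffun 'I_(size s) -> T} => [ffun i => t (z i)].
    have t'l : linear t' by move=> r x y; apply/ffunP => i; rewrite /t' ffunDE ffunZE !ffunE ?ffunDE ?ffunZE linearP.
    exists {ffun 'I_(size s) -> X}, {ffun 'I_(size s) -> T}, (lin_of k'l), (lin_of t'l); split.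
    * exact: S_prod.
    * move=> x y /ffunP H; apply/ffunP => i; apply: tinj; have := H i; by rewrite /= /t' !ffunE.
    * move=> y ay /ffunP H; apply: val_inj; apply/ffunP => i; rewrite /= ffunE.
      apply: k0; last by have := H i; rewrite /= /k' !ffunE.
      move=> r hr; have := congr1 (fun z : I => val z i) (ay r hr).
      by move=> h; rewrite -ffunZE -(ffun0E _ i); exact: h.
    * move=> y ay.
      have : forall i : 'I_(size s), exists z, k (val y i) = t z.
        move=> i; apply: kex => r hr; have := congr1 (fun z : I => val z i) (ay r hr).
        by move=> h; rewrite -ffunZE -(ffun0E _ i); exact: h.
      case/fin_all_exists => u hu; exists [ffun i => u i].
      by apply/ffunP => i; rewrite /= /k' /t' !ffunE hu.
Qed.

End Main.

Lemma S_NS (R : comPzRingType) (S : lmodType R -> Prop) (X : lmodType R) : S X -> NS S X.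
Proof.
move=> SX.
have il : linear (fun x : X => x) by [].
exists (submT (zeroC X)), X, (@subincl _ _ _ (zeroC X)), (lin_of il); split => //.
- split.
  + exact: val_inj.
  + by move=> q; exists q.
  + move=> m; split; first by move=> h; exists (sm (zeroC X) h).
    by move=> [n ->]; exact: (smP n).
- exists [::] => x; exists (fun _ => 0); rewrite big_ord0; apply: val_inj; exact: (smP x).
Qed.

Theorem proposition3p6 (R : comPzRingType) (a : R -> Prop) (S : lmodType R -> Prop) :
  noetherian_ring R -> is_ideal a -> ideal_height_ge a 1 -> serre S ->
  (forall M : lmodType R, C_on (NS S) a M -> C_on S a M) /\
  (satisfies_C (NS S) a -> satisfies_C S a).
Proof.
move=> Hnoeth Hid _ [Ssub Squo Sext].
have P1 : forall M : lmodType R, C_on (NS S) a M -> C_on S a M.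
  move=> M HC Htor Hann.
  have [N0 [f0 [f0inj f0iff SN0]]] := Hann.
  have Hann' : annihilator_in (NS S) a M.
    by exists N0, f0; split => //; exact: S_NS.
  have [N [Q [f [g [sfg [s' hs'] SQ]]]]] := HC Htor Hann'.
  have [finj _ _] := sfg.
  have [s hs] := Hnoeth a Hid.
  apply: (Sext _ _ _ f g sfg _ SQ).
  have : forall i : 'I_(size s'), exists n, killed_by_pow a n (s'`_i).
    move=> i; have [n hn] := Htor (f s'`_i); exists n; exact: (killed_inj finj hn).
  case/fin_all_exists => nf hnf.
  apply: (@mainS R a S Ssub Squo Sext s hs (\max_i nf i) N).
  - move=> x r hr; have [c ->] := hs' x.
    rewrite scaler_sumr big1 // => i _.
    rewrite scalerA mulrC -scalerA.
    by rewrite (killed_le (leq_bigmax i) (hnf i)) // scaler0.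
  - exists M, N0, f, f0; split => //.
    + by move=> x _ hx; apply: finj; rewrite hx linear0.
    + move=> x ax.
      have hx : forall r, a r -> r *: f x = 0.
        by move=> r hr; rewrite -linearZ_LR ax // linear0.
      have [y hy] := proj1 (f0iff (f x)) hx.
      by exists y.
split => // HC M; exact: P1.
Qed.
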